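(* For every $m\geq1$ and every $i\in\{1,\dots,N\}$, $$C^{(2m+1)}_{ii}\cdot v=C^{(2m+1)}_{-i,-i}\cdot v=\lambda_i(\lambda_i-1)\,C^{(2m-1)}_{ii}\cdot v-2\lambda_i\sum_{j=i+1}^{N}C^{(2m-1)}_{jj}\cdot v.$$
   Context: Let $N\geq1$, $I=\{-N,\dots,-1,1,\dots,N\}$, and for $k\in I$ put $\bar k=0$ if $k>0$, $\bar k=1$ if $k<0$. The Lie superalgebra $\mathfrak{q}(N)$ over $\mathbb{C}$ is spanned by elements $F_{ij}$ ($i,j\in I$) with $F_{-i,-j}=F_{ij}$ (realized as $F_{ij}=E_{ij}+E_{-i,-j}\in\mathfrak{gl}(N|N)$), $F_{ij}$ of parity $\bar\imath+\bar\jmath\bmod 2$, and supercommutator $$[F_{ij}, F_{kl}] = \delta_{kj} F_{il} - (-1)^{(\bar{\imath}+ \bar{\jmath})(\bar{k} + \bar{l})} \delta_{il} F_{kj} + \delta_{k,-j} F_{-i,l} - (-1)^{(\bar{\imath} + \bar{\jmath})(\bar{k} + \bar{l})} \delta_{-i,l} F_{k,-j}.$$ For $n\geq1$ define $C^{(n)}_{ij}\in U(\mathfrak{q}(N))$ by $$C^{(n)}_{ij} = \sum_{k_1,\ldots,k_{n-1}\in I}F_{ik_1} (-1)^{\bar{k}_1} F_{k_1k_2} (-1)^{\bar{k}_2} \cdots F_{k_{n-2}k_{n-1}} (-1)^{\bar{k}_{n-1}} F_{k_{n-1}j}$$ (so $C^{(1)}_{ij}=F_{ij}$). Let $V$ be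 a representation of $\mathfrak{q}(N)$ and $v\in V$ a vector such that $F_{ij}\cdot v=0$ whenever $|i|<|j|$, and $F_{ii}\cdot v=\lambda_i v$ for $i=1,\dots,N$, where $\lambda_1,\dots,\lambda_N\in\mathbb{C}$. *)

(* Defs.v *)
From HB Require Import structures.
From mathcomp Require Import all_boot all_order all_algebra.
Set Implicit Arguments. Unset Strict Implicit. Unset Printing Implicit Defensive.
Import Order.TTheory GRing.Theory Num.Theory.
Local Open Scope ring_scope.

(* Index set I = {-N,...,-1,1,...,N}, encoded as pairs (a, s) : 'I_N * bool,
   standing for the integer  (-1)^s * (a+1).  So |k| = k.1 + 1, and
   bar k = k.2  (bar k = 1 iff k < 0). *)
Definition idx (N : nat) : finType := ('I_N * bool)%type.

Definition ineg (N : nat) (k : idx N) : idx N := (k.1, ~~ k.2).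

Definition ipos (N : nat) (a : 'I_N) : idx N := (a, false).

Definition ipar (N : nat) (k : idx N) : nat := nat_of_bool k.2.

Definition kdelta (K : nzRingType) (T : eqType) (x y : T) : K := (x == y)%:R.

(* rho is a representation of q(N) on V: rho i j is the action of F_ij,
   with F_{-i,-j} = F_ij and the supercommutator relations of q(N). *)
Definition is_qrep (K : fieldType) (V : lmodType K) (N : nat)
  (rho : idx N -> idx N -> {linear V -> V}) : Prop :=
  (forall i j : idx N, rho (ineg i) (ineg j) = rho i j) /\
  (forall (i j k l : idx N) (w : V),
     let s : K := (-1) ^+ ((ipar i + ipar j) * (ipar k + ipar l))%N in
     rho i j (rho k l w) - s *: rho k l (rho i j w) =
       kdelta K k j *: rho i l w
     - s *: (kdelta K i l *: rho k j w)
     + kdelta K k (ineg j) *: rho (ineg i) l w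
     - s *: (kdelta K (ineg i) l *: rho k (ineg j) w)).

(* Cact rho n i j w = C^{(n)}_{ij} . w  for n >= 1 (and 0 for n = 0), via
   C^{(1)}_{ij} = F_ij and
   C^{(n+1)}_{ij} = sum_k F_{ik} (-1)^{bar k} C^{(n)}_{kj}. *)
Fixpoint Cact (K : fieldType) (V : lmodType K) (N : nat)
  (rho : idx N -> idx N -> {linear V -> V}) (n : nat) (i j : idx N) (w : V)
  {struct n} : V :=
  match n with
  | 0 => 0
  | n'.+1 =>
      if n' is 0 then rho i j w
      else \sum_(k : idx N) ((-1) ^+ ipar k) *: rho i k (Cact rho n' k j w)
  end.

(* Main.v *)
Require Import Defs.
From HB Require Import structures.
From mathcomp Require Import all_boot all_order all_algebra.
From mathcomp Require Import ring.
Import Order.TTheory GRing.Theory Num.Theory.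
Local Open Scope ring_scope.

Lemma zmod9 (V : zmodType) (x a b s2 s4 u5 u7 : V) :
  x + ((a - s2 + b - s4) + (u5 - a + u7 - b)) = x + (u5 - s2 + u7 - s4).
Proof.
congr (x + _).
rewrite [u5 - a]addrC !addrA (addrAC _ (-a)) (addrAC _ (-a)) (addrAC _ (-a)).
rewrite [a - s2]addrC (addrAC _ a) (addrAC _ a) (addrAC _ a) (addrAC _ a) (addrAC _ a) addrK.
rewrite (addrAC _ b) (addrAC _ b) (addrAC _ b) addrK.
rewrite (addrAC (-s2)) (addrC (-s2) u5).
by rewrite [RHS]addrAC [u5 - s2 - s4]addrAC.

Qed.


Lemma zmod5 (V : zmodType) (a b d e : V) : a - b - d - (e - b) = a - e - d.
Proof.
rewrite opprB addrA (addrAC _ (-d)) subrK.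
by rewrite addrAC.
Qed.
Lemma sgE (R : pzRingType) m : (-1 : R) ^+ (2 * m) = 1.
Proof. by rewrite exprM expr2 mulrNN mulr1 expr1n. Qed.

Section S.
Variables (K : fieldType) (V : lmodType K) (N : nat)
  (rho : idx N -> idx N -> {linear V -> V}).

Local Notation C := (Cact rho).
Arguments Cact : simpl never.

Lemma CactS n k l w : C n.+2 k l w =
  \sum_(p : idx N) ((-1) ^+ ipar p) *: rho k p (C n.+1 p l w).
Proof. by []. Qed.

Lemma Cact1 k l w : C 1 k l w = rho k l w.
Proof. by []. Qed.

Lemma CactZ n k l (a : K) w : C n k l (a *: w) = a *: C n k l w.
Proof.
elim: n k l w => [|n IH] k l w; first by rewrite /= scaler0.
case: n IH => [|n] IH; first by rewrite !Cact1 linearZ.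
rewrite !CactS scaler_sumr; apply: eq_bigr => p _.
by rewrite IH linearZ /= !scalerA mulrC.
Qed.

Lemma Cact0 n k l : C n k l 0 = 0.
Proof. by have := CactZ n k l 0 0; rewrite !scale0r. Qed.

Lemma sumD (F : idx N -> V) j : \sum_p kdelta K p j *: F p = F j.
Proof.
rewrite (bigD1 j) //= /kdelta eqxx scale1r big1 ?addr0 // => p.
move=> /negbTE ->.
by rewrite scale0r.
Qed.

Lemma ineg_inj : injective (@ineg N : idx N -> idx N).
Proof. by move=> [a b] [c d] [-> /negb_inj ->]. Qed.

Lemma inegK : involutive (@ineg N).
Proof. by move=> [a b]; rewrite /ineg /= negbK. Qed.


Lemma sg_ineg (p : idx N) : (-1 : K) ^+ ipar (ineg p) = - (-1) ^+ ipar p.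
Proof. by case: p => a [] /=; rewrite /ipar /= ?expr0 ?expr1 ?opprK. Qed.

Hypothesis Hsym : forall i j : idx N, rho (ineg i) (ineg j) = rho i j.

Lemma Csym n k l w : C n.+1 (ineg k) (ineg l) w = (-1) ^+ n *: C n.+1 k l w.
Proof.
elim: n k l w => [|n IH] k l w; first by rewrite !Cact1 Hsym scale1r.
rewrite !CactS (reindex_inj (@ineg_inj)) scaler_sumr; apply: eq_bigr => p _.
rewrite sg_ineg Hsym IH linearZ /= !scalerA exprS; congr (_ *: _).
by rewrite mulN1r !mulNr [X in _ = - X]mulrC.
Qed.


Local Notation sgn i j k l := ((-1 : K) ^+ ((ipar i + ipar j) * (ipar k + ipar l))%N).

Lemma sg_odd (a b : nat) : odd a = odd b -> (-1 : K) ^+ a = (-1) ^+ b.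
Proof. by move=> h; rewrite -[LHS]signr_odd -[RHS]signr_odd h. Qed.

Lemma sgn_mul (i j k p l : idx N) : sgn i j k p * sgn i j p l = sgn i j k l.
Proof.
rewrite -exprD; apply: sg_odd; rewrite /ipar.
by case: i => ? []; case: j => ? []; case: k => ? []; case: p => ? []; case: l => ? [].
Qed.

Lemma sgn_cross (i j k : idx N) :
  (-1) ^+ ipar i * sgn i j k i = (-1) ^+ ipar j * sgn i j k j.
Proof.
rewrite -!exprD; apply: sg_odd; rewrite /ipar.
by case: i => ? []; case: j => ? []; case: k => ? [].
Qed.

Lemma sgn_cross' (i j k : idx N) :
  (-1) ^+ ipar (ineg i) * sgn i j k (ineg i) = (-1) ^+ ipar (ineg j) * sgn i j k (ineg j).
Proof.
rewrite -!exprD; apply: sg_odd; rewrite /ipar.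
by case: i => ? []; case: j => ? []; case: k => ? [].
Qed.


Lemma kdeltaC (x y : idx N) : kdelta K x y = kdelta K y x.
Proof. by rewrite /kdelta eq_sym. Qed.

Definition Rhs n i j k l w :=
  kdelta K k j *: C n i l w - sgn i j k l *: (kdelta K i l *: C n k j w)
  + kdelta K k (ineg j) *: C n (ineg i) l w
  - sgn i j k l *: (kdelta K (ineg i) l *: C n k (ineg j) w).

Hypothesis Hcomm : forall (i j k l : idx N) (w : V),
     let s : K := (-1) ^+ ((ipar i + ipar j) * (ipar k + ipar l))%N in
     rho i j (rho k l w) - s *: rho k l (rho i j w) =
       kdelta K k j *: rho i l w
     - s *: (kdelta K i l *: rho k j w)
     + kdelta K k (ineg j) *: rho (ineg i) l w
     - s *: (kdelta K (ineg i) l *: rho k (ineg j) w).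

Lemma shape9 (a b1 b2 b3 b4 q1 q2 q3 q4 : V)
  (c c' d1 d1' d2 d2' d3 d3' d4 d4' f1 f1' f2 f2' f3 f3' f4 f4' : K) :
  c = c' -> d1 = d1' -> d2 = d2' -> d3 = d3' -> d4 = d4' ->
  f1 = f1' -> f2 = f2' -> f3 = f3' -> f4 = f4' ->
  c *: a + (d1 *: b1 - d2 *: b2 + d3 *: b3 - d4 *: b4)
    + (f1 *: q1 - f2 *: q2 + f3 *: q3 - f4 *: q4) =
  c' *: a + ((d1' *: b1 - d2' *: b2 + d3' *: b3 - d4' *: b4)
    + (f1' *: q1 - f2' *: q2 + f3' *: q3 - f4' *: q4)).
Proof. by move=> -> -> -> -> -> -> -> -> ->; rewrite [RHS]addrA. Qed.

Lemma rcomm i j k l w :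
  rho i j (rho k l w) = sgn i j k l *: rho k l (rho i j w) + Rhs 1 i j k l w.
Proof.
by have := Hcomm i j k l w; rewrite /= => /eqP; rewrite subr_eq addrC => /eqP.
Qed.

Lemma Ccomm n i j k l w :
  rho i j (C n.+1 k l w) = sgn i j k l *: C n.+1 k l (rho i j w) + Rhs n.+1 i j k l w.
Proof.
elim: n i j k l w => [|n IH] i j k l w.
  exact: rcomm.
rewrite /Rhs !CactS linear_sum /=.
set e := fun p : idx N => (-1 : K) ^+ ipar p.
set X := fun p => C n.+1 p l w.
set Y := fun p => C n.+1 p l (rho i j w).
rewrite (eq_bigr (fun p =>
  sgn i j k l *: (e p *: rho k p (Y p)) +
  ((kdelta K p j *: ((e p * sgn i j k p) *: rho k p (C n.+1 i l w))
   - sgn i j k l *: (kdelta K i l *: (e p *: rho k p (C n.+1 p j w)))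
   + kdelta K p (ineg j) *: ((e p * sgn i j k p) *: rho k p (C n.+1 (ineg i) l w))
   - sgn i j k l *: (kdelta K (ineg i) l *: (e p *: rho k p (C n.+1 p (ineg j) w))))
  + (kdelta K k j *: (e p *: rho i p (X p))
   - kdelta K p i *: ((e p * sgn i j k p) *: rho k j (X p))
   + kdelta K k (ineg j) *: (e p *: rho (ineg i) p (X p))
   - kdelta K p (ineg i) *: ((e p * sgn i j k p) *: rho k (ineg j) (X p)))))); last first.
  move=> p _.
  rewrite linearZ /= rcomm /Rhs /= (IH i j p l w) /Rhs.
  rewrite !(linearD, linearN, linearZ) /=.
  rewrite !(scalerDr, scalerN, scalerA).
  rewrite !Cact1 /X /Y /e; apply: shape9;
    rewrite /e ?(kdeltaC i p) ?(kdeltaC (ineg i) p) -?(sgn_mul i j k p l); ring.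
rewrite !big_split /= !sumrN !sumD -!scaler_sumr /e /X.
rewrite (sgn_cross i j k) (sgn_cross' i j k).
exact: zmod9.
Qed.


Lemma sum_idx (F : idx N -> V) :
  \sum_(p : idx N) F p = \sum_(b : 'I_N) (F (b, false) + F (b, true)).
Proof.
transitivity (\sum_(b : 'I_N) \sum_(s : bool) F (b, s)).
  by rewrite pair_bigA; apply: eq_bigr => -[].
by apply: eq_bigr => b _; rewrite big_bool addrC.
Qed.

Lemma kd0 (x y : idx N) : x != y -> kdelta K x y = 0.
Proof. by rewrite /kdelta => /negbTE ->. Qed.

Lemma kd1 (x : idx N) : kdelta K x x = 1.
Proof. by rewrite /kdelta eqxx. Qed.

Variable v : V.
Hypothesis Hhw : forall i j : idx N, (i.1 < j.1)%N -> rho i j v = 0.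

Lemma neq1 (x y : idx N) : x.1 != y.1 -> x != y.
Proof. by apply: contra => /eqP ->. Qed.

Lemma Cvan n (k l : idx N) : (k.1 < l.1)%N -> C n.+1 k l v = 0.
Proof.
elim: n k l => [|n IH] k l hkl; first by rewrite Cact1 Hhw.
rewrite CactS big1 // => p _.
case: (ltnP p.1 l.1) => h; first by rewrite IH // linear0 scaler0.
have hkp : (k.1 < p.1)%N by apply: leq_trans h.
rewrite Ccomm Hhw // Cact0 scaler0 add0r /Rhs IH // scaler0 add0r.
have e1 : k != l by apply: neq1; apply/eqP => E; move: hkl; rewrite E ltnn.
have e2 : p != ineg p by apply/eqP => /(congr1 snd) /=; case: (p.2).
have e3 : ineg k != l by apply: neq1; apply/eqP => /= E; move: hkl; rewrite E ltnn.
rewrite (kd0 _ _ e1) (kd0 _ _ e2) (kd0 _ _ e3).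
by rewrite !scale0r ?scaler0 oppr0 !addr0 scaler0.
Qed.


Variable lam : 'I_N -> K.
Hypothesis Hwt : forall a : 'I_N, rho (ipos a) (ipos a) v = lam a *: v.

Lemma pn (a : 'I_N) : ipos a != ineg (ipos a).
Proof. by rewrite /ipos /ineg /= xpair_eqE eqxx. Qed.
Lemma np (a : 'I_N) : ineg (ipos a) != ipos a.
Proof. by rewrite eq_sym pn. Qed.

Lemma FiiC n (a : 'I_N) : rho (ipos a) (ipos a) (C n.+1 (ipos a) (ipos a) v)
  = lam a *: C n.+1 (ipos a) (ipos a) v.
Proof.
rewrite Ccomm Hwt CactZ /Rhs kd1 (kd0 _ _ (pn a)) (kd0 _ _ (np a)) /ipar /=.
by rewrite !expr0 !scale1r !scale0r subrr subr0 !addr0.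
Qed.

Lemma FiiU n (a : 'I_N) : rho (ipos a) (ipos a) (C n.+1 (ineg (ipos a)) (ipos a) v)
  = lam a *: C n.+1 (ineg (ipos a)) (ipos a) v.
Proof.
rewrite Ccomm Hwt CactZ /Rhs kd1 ?(kd0 _ _ (pn a)) ?(kd0 _ _ (np a)) /ipar /=.
by rewrite kd1 !expr0 !scale1r ?scale0r sub0r addNr subr0 addr0.
Qed.

Hypothesis H2 : (2 : K) != 0.

Lemma osq (a : 'I_N) w : rho (ipos a) (ineg (ipos a)) (rho (ipos a) (ineg (ipos a)) w)
  = rho (ipos a) (ipos a) w.
Proof.
have := rcomm (ipos a) (ineg (ipos a)) (ipos a) (ineg (ipos a)) w.
rewrite /Rhs inegK kd1 ?(kd0 _ _ (pn a)) ?(kd0 _ _ (np a)) /ipar /=.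
rewrite kd1 !Cact1 Hsym expr1 !scale0r !scale1r !scaleN1r ?scaler0 ?subr0 ?opprK ?add0r.
move=> h; apply: (scalerI H2); rewrite !scaler_nat !mulr2n.
by rewrite {1}h addrAC addNr add0r.
Qed.


Lemma Csym' n k l w : C n.+1 (ineg k) l w = (-1) ^+ n *: C n.+1 k (ineg l) w.
Proof. by rewrite -Csym inegK. Qed.

Lemma xrec n (a : 'I_N) : C n.+2 (ipos a) (ipos a) v =
  lam a *: C n.+1 (ipos a) (ipos a) v
  - rho (ipos a) (ineg (ipos a)) (C n.+1 (ineg (ipos a)) (ipos a) v)
  - (1 + (-1) ^+ n) *: \sum_(b : 'I_N | (a < b)%N) C n.+1 (ipos b) (ipos b) v.
Proof.
rewrite CactS sum_idx (bigD1 a) //= (bigID (fun b : 'I_N => (a < b)%N)) /=.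
rewrite [X in _ + (_ + X)]big1; last first.
  move=> b /andP [hne]; rewrite -leqNgt => hle.
  have hba : (b < a)%N by rewrite ltn_neqAle hle andbT.
  by rewrite !Cvan // !raddf0 addr0.
have Gb : forall b : 'I_N, (a < b)%N ->
  (-1) ^+ ipar ((b, false) : idx N) *: rho (ipos a) (b, false) (C n.+1 (b, false) (ipos a) v)
  + (-1) ^+ ipar ((b, true) : idx N) *: rho (ipos a) (b, true) (C n.+1 (b, true) (ipos a) v)
  = - ((1 + (-1) ^+ n) *: C n.+1 (ipos b) (ipos b) v).
  move=> b hab.
  rewrite -[(b, false)]/(ipos b) -[(b, true)]/(ineg (ipos b)).
  rewrite !Ccomm (Hhw (ipos a) (ipos b) hab) (Hhw (ipos a) (ineg (ipos b)) hab).
  rewrite !Cact0 !scaler0 !add0r /Rhs ?inegK !kd1.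
  rewrite ?(kd0 _ _ (pn b)) ?(kd0 _ _ (np b)) ?(kd0 _ _ (np a)) Csym /ipar /=.
  rewrite !(add0n, addn0, muln1, mul0n) expr0 expr1 !scale0r !scaler0 !subr0 !addr0 !scale1r.
  rewrite !scaleN1r opprK scalerDl scale1r.
  by rewrite !opprD addrACA subrr add0r.
rewrite (eq_bigr (fun b : 'I_N => - ((1 + (-1) ^+ n) *: C n.+1 (ipos b) (ipos b) v)));
  last by move=> b /andP [_ hb]; exact: Gb.
rewrite sumrN -scaler_sumr addr0.
rewrite -[(a, false)]/(ipos a) -[(a, true)]/(ineg (ipos a)) FiiC /ipar /=.
rewrite expr0 expr1 scale1r scaleN1r; congr (_ - _ *: _).
apply: eq_bigl => i /=; apply/andP/idP => [[] //| h]; split => //.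
by apply/eqP => E; move: h; rewrite E ltnn.
Qed.


Lemma urec n (a : 'I_N) : C n.+2 (ineg (ipos a)) (ipos a) v =
  rho (ipos a) (ineg (ipos a)) (C n.+1 (ipos a) (ipos a) v)
  - lam a *: C n.+1 (ineg (ipos a)) (ipos a) v
  + ((-1) ^+ n - 1) *: \sum_(b : 'I_N | (a < b)%N) C n.+1 (ipos b) (ineg (ipos b)) v.
Proof.
rewrite CactS sum_idx (bigD1 a) //= (bigID (fun b : 'I_N => (a < b)%N)) /=.
rewrite [X in _ + (_ + X)]big1; last first.
  move=> b /andP [hne]; rewrite -leqNgt => hle.
  have hba : (b < a)%N by rewrite ltn_neqAle hle andbT.
  by rewrite !Cvan // !raddf0 addr0.
have Gb : forall b : 'I_N, (a < b)%N ->
  (-1) ^+ ipar ((b, false) : idx N) *: rho (ineg (ipos a)) (b, false) (C n.+1 (b, false) (ipos a) v)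
  + (-1) ^+ ipar ((b, true) : idx N) *: rho (ineg (ipos a)) (b, true) (C n.+1 (b, true) (ipos a) v)
  = ((-1) ^+ n - 1) *: C n.+1 (ipos b) (ineg (ipos b)) v.
  move=> b hab.
  rewrite -[(b, false)]/(ipos b) -[(b, true)]/(ineg (ipos b)).
  rewrite !Ccomm (Hhw (ineg (ipos a)) (ipos b) hab) (Hhw (ineg (ipos a)) (ineg (ipos b)) hab).
  rewrite !Cact0 !scaler0 !add0r /Rhs ?inegK !kd1 (Csym' n (ipos b) (ipos b)).
  rewrite ?(kd0 _ _ (pn b)) ?(kd0 _ _ (np b)) ?(kd0 _ _ (np a)) /ipar /=.
  rewrite !(add0n, addn0, muln1, mul0n, mul1n) expr0 expr1 !scale0r !scaler0 !subr0 !addr0 !scale1r.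
  have -> : (-1 : K) ^+ (1 + 1) = 1 by rewrite expr2 mulrNN mulr1.
  rewrite scaleN1r scale1r opprB scalerBl scale1r.
  by rewrite [LHS]addrC addrA subrK.
rewrite (eq_bigr (fun b : 'I_N => ((-1) ^+ n - 1) *: C n.+1 (ipos b) (ineg (ipos b)) v));
  last by move=> b /andP [_ hb]; exact: Gb.
rewrite -scaler_sumr addr0.
rewrite -[(a, false)]/(ipos a) -[(a, true)]/(ineg (ipos a)) Hsym FiiU /ipar /=.
rewrite -[in RHS](Hsym (ipos a)) inegK expr0 expr1 scale1r scaleN1r.
congr (_ + _ *: _).
apply: eq_bigl => i /=; apply/andP/idP => [[] //| h]; split => //.
by apply/eqP => E; move: h; rewrite E ltnn.
Qed.

Lemma mainx m (a : 'I_N) :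
  C (2 * m).+3 (ipos a) (ipos a) v =
  (lam a * (lam a - 1)) *: C (2 * m).+1 (ipos a) (ipos a) v
  - (2 * lam a) *: \sum_(b : 'I_N | (a < b)%N) C (2 * m).+1 (ipos b) (ipos b) v.
Proof.
rewrite (xrec (2 * m).+1) (xrec (2 * m)) (urec (2 * m)) exprS !sgE mulr1.
rewrite subrr !scale0r addr0 subr0.
rewrite [X in _ - X = _]linearB /= [X in _ - (_ - X) = _]linearZ /= osq FiiC.
set x := C _ (ipos a) (ipos a) v.
set ou := rho _ _ (C _ (ineg (ipos a)) (ipos a) v).
set S := \sum_(b < N | _) _.
rewrite !scalerBr !scalerA mulrBr mulr1 scalerBl -[1 + 1]/(2 : K) [2 * lam a]mulrC.
exact: zmod5.
Qed.

End S.

Theorem proposition5 (K : numClosedFieldType) (V : lmodType K) (N : nat)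
  (rho : idx N -> idx N -> {linear V -> V})
  (Hrep : is_qrep rho)
  (v : V) (lam : 'I_N -> K)
  (Hhw : forall i j : idx N, (i.1 < j.1)%N -> rho i j v = 0)
  (Hwt : forall a : 'I_N, rho (ipos a) (ipos a) v = lam a *: v) :
  forall (m : nat) (a : 'I_N), (1 <= m)%N ->
    Cact rho (2 * m + 1) (ipos a) (ipos a) v
      = Cact rho (2 * m + 1) (ineg (ipos a)) (ineg (ipos a)) v /\
    Cact rho (2 * m + 1) (ipos a) (ipos a) v
      = (lam a * (lam a - 1)) *: Cact rho (2 * m - 1) (ipos a) (ipos a) v
        - (2 * lam a) *: \sum_(b : 'I_N | (a < b)%N)
                           Cact rho (2 * m - 1) (ipos b) (ipos b) v.
Proof.
case: Hrep => Hsym Hcomm m a.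
case: m => [//|m] _.
have E1 : (2 * m.+1 + 1 = (2 * m).+3)%N by rewrite mulnS addn1.
have E2 : (2 * m.+1 - 1 = (2 * m).+1)%N by rewrite mulnS.
rewrite E1 E2; split.
  have E3 : ((2 * m).+2 = 2 * m.+1)%N by rewrite mulnS add2n.
  by rewrite (@Csym _ _ _ rho Hsym) E3 sgE scale1r.
apply: (@mainx _ _ _ rho Hsym Hcomm v Hhw lam Hwt).
by rewrite pnatr_eq0.
Qed.
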